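(* Fix $\tilde r^2>0$, $\tilde\sigma^2>0$ (an observational family) and $\gamma\in(0,\infty)$. Then the optimal causal regularization $\lambda_C(\gamma)$ depends on the causal model only through its confounding strength $\zeta$. With $$\rho(\gamma,\mathrm{SNR}_{\rm stat})=-\mathrm{SNR}_{\rm stat}^{-1}\frac{\gamma\max\{1,\gamma\}}{(1-\gamma)^2}$$ (interpreted as $-\infty$ when $\gamma=1$), the following hold: - if $\zeta\le\rho(\gamma,\mathrm{SNR}_{\rm stat})$, then $\lambda_C=0$; - if $\rho(\gamma,\mathrm{SNR}_{\rm stat})<\zeta<1$, then $\lambda_C\in(0,\infty)$ and $\lambda_C$ is a differentiable function of $\zeta$ with $\partial_\zeta\lambda_C(\gamma)>0$; - if $\zeta\ge1$, then $\lambda_C=\infty$.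
   Context: Setting: isotropic linear causal models $z\sim\mathcal N(0,I_l)$, $\varepsilon\sim\mathcal N(0,\sigma^2)$, $x=Mz$ with $MM^T=I_d$, and $y=x^T\beta+z^T\alpha+\varepsilon$. Write $\Gamma=M\alpha$, $\tilde\beta=\beta+\Gamma$ and $\tilde\sigma^2=\sigma^2+\|\alpha\|^2-\|\Gamma\|^2$. Asymptotically the model is summarized by constants $\|\beta\|^2=r^2$, $\|\Gamma\|^2=\omega^2$, $\langle\Gamma,\beta\rangle=\eta$ and $\tilde\sigma^2$, with $\tilde r^2=r^2+\omega^2+2\eta$. Observational family: models entailing the same observational distribution share $\tilde r^2$ and $\tilde\sigma^2$, while $(\omega^2,\eta)$ vary. Derived quantities: confounding strength $\zeta=(\omega^2+\eta)/\tilde r^2$ and $\mathrm{SNR}_{\rm stat}=\tilde r^2/\tilde\sigma^2$. Limiting causal risk of ridge regression with parameter $\lambda>0$ at ratio $\gamma=\lim d/n$: $$\mathcal R_\lambda(\gamma)=\omega^2+\tilde r^2\lambda^2m'(-\lambda)-2(\omega^2+\eta)\lambda m(-\lambda)+\tilde\sigma^2\gamma\big(m(-\lambda)-\lambda m'(-\lambda)\big)+\tilde\sigma^2+\omega^2,$$ where $m(z)=\frac{(1-\gamma-z)-\sqrt{(1-\gamma-z)^2-4\gamma z}}{2\gamma z}$ and $m'$ is its derivative. Optimal causal regularization: $\lambda_C(\gamma)=\arg\inf_{\lambda\in(0,\infty)}\mathcal R_\lambda(\gamma)$. By convention $\lambda_C=0$ if the infimum is attained only as $\lambda\to0^+$,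 and $\lambda_C=\infty$ if it is attained only as $\lambda\to\infty$. *)

(* Defs.v *)
From Stdlib Require Import Reals.
From Coquelicot Require Import Coquelicot.
Open Scope R_scope.

(* Stieltjes transform of the Marchenko-Pastur law with ratio g (used for z < 0):
   m(z) = ((1-g-z) - sqrt((1-g-z)^2 - 4 g z)) / (2 g z). *)
Definition mp_m (g z : R) : R :=
  ((1 - g - z) - sqrt ((1 - g - z)^2 - 4 * g * z)) / (2 * g * z).

(* Limiting causal risk of ridge regression with parameter lam at ratio g,
   with rt2 = tilde r^2, st2 = tilde sigma^2, om2 = omega^2, eta = <Gamma,beta>.
   m'(-lam) is the (Coquelicot) derivative of z |-> m(z) at z = -lam. *)
Definition causal_risk (rt2 st2 om2 eta g lam : R) : R :=
  om2 + rt2 * lam^2 * Derive (mp_m g) (- lam)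
  - 2 * (om2 + eta) * lam * mp_m g (- lam)
  + st2 * g * (mp_m g (- lam) - lam * Derive (mp_m g) (- lam))
  + st2 + om2.

(* "lamC is the optimal causal regularization" for a risk function Rf on (0,oo),
   with the conventions: lamC = 0 iff the infimum is attained only as lam -> 0+,
   lamC = +oo iff it is attained only as lam -> oo; otherwise lamC is the
   (unique) minimizer in (0,oo). *)
Definition is_opt_reg (Rf : R -> R) (lamC : Rbar) : Prop :=
  match lamC with
  | Finite l =>
      if Req_EM_T l 0 then
        exists L : R, (forall mu, 0 < mu -> L < Rf mu) /\
                      filterlim Rf (at_right 0) (locally L)
      else
        0 < l /\ (forall mu, 0 < mu -> Rf l <= Rf mu) /\
        (forall mu, 0 < mu -> (forall nu, 0 < nu -> Rf mu <= Rf nu) -> mu = l)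
  | p_infty =>
      exists L : R, (forall mu, 0 < mu -> L < Rf mu) /\
                    filterlim Rf (Rbar_locally p_infty) (locally L)
  | m_infty => False
  end.

Definition opt_causal_reg (rt2 st2 om2 eta g : R) (lamC : Rbar) : Prop :=
  is_opt_reg (causal_risk rt2 st2 om2 eta g) lamC.

(* Asymptotic constants realizable by a causal model in the observational family
   with tilde r^2 = rt2: omega^2 >= 0, r^2 = rt2 - omega^2 - 2 eta >= 0 and
   Cauchy-Schwarz eta^2 <= r^2 omega^2. *)
Definition admissible (rt2 om2 eta : R) : Prop :=
  0 <= om2 /\ 0 <= rt2 - om2 - 2 * eta /\ eta^2 <= (rt2 - om2 - 2 * eta) * om2.

Definition conf_strength (rt2 om2 eta : R) : R := (om2 + eta) / rt2.
Definition snr_stat (rt2 st2 : R) : R := rt2 / st2.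

Definition rho (g snr : R) : Rbar :=
  if Req_EM_T g 1 then m_infty
  else Finite (- / snr * (g * Rmax 1 g / (1 - g)^2)).

(* Main.v *)
Require Import Defs.
From Stdlib Require Import Reals Lra Classical ClassicalEpsilon Ranalysis5.
From Coquelicot Require Import Coquelicot.
Open Scope R_scope.
Ltac neq := let H := fresh in intro H; nra.
Ltac nz := repeat (apply Rmult_integral_contrapositive_currified); first [assumption | exact R1_neq_R0 | idtac].

Definition cA g p := 1 - (1 - g) * p.
Definition cB g p := 1 + g * p.
Definition cE g p := 1 + 2 * g * p - g * (1 - g) * p ^ 2.
Definition lamp g p := cA g p / (p * cB g p).
Lemma mp_deriv_raw0 (g z : R) : 0 < g -> z < 0 ->
  is_derive (fun z => ((1 - g - z) - sqrt ((1 - g - z)^2 - 4 * g * z)) / (2 * g * z)) z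
   ((g*(((1 - g - z) - sqrt ((1 - g - z)^2 - 4 * g * z)) / (2 * g * z))^2 + ((1 - g - z) - sqrt ((1 - g - z)^2 - 4 * g * z)) / (2 * g * z))/sqrt ((1 - g - z)^2 - 4*g*z)).
Proof.
  intros Hg Hz.
  assert (H1: 0 < g * (-z)) by (apply Rmult_lt_0_compat; lra).
  pose proof (Rle_0_sqr (1-g-z)). unfold Rsqr in *.
  auto_derive.
  { split; [nra|split; [neq|auto]]. }
  assert (HQ : 0 < (1 - g - z)^2 - 4*g*z) by nra.
  replace ((1 - g + - z) * ((1 - g + - z) * 1) + - (4 * g * z)) with ((1 - g - z)^2 - 4*g*z) by ring.
  set (Q := (1 - g - z)^2 - 4*g*z) in *.
  assert (HS : sqrt Q * sqrt Q = Q) by (apply sqrt_sqrt; lra).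
  assert (HS0 : 0 < sqrt Q) by (apply sqrt_lt_R0; lra).
  set (S := sqrt Q) in *.
  field_simplify; try (repeat split; neq).
  replace (S ^ 2) with Q by (rewrite <- HS; ring). unfold Q.
  field; repeat split; neq.
Qed.
Lemma mp_props (g l : R) : 0 < g -> 0 < l ->
  let p := mp_m g (- l) in
  0 < p /\ g * l * p ^ 2 + (1 - g + l) * p - 1 = 0 /\
  sqrt ((1 - g - - l) ^ 2 - 4 * g * - l) = (1 - g + l) + 2 * g * l * p.
Proof.
  intros Hg Hl p.
  assert (H1 : 0 < g * l) by (apply Rmult_lt_0_compat; lra).
  set (Q := (1 - g - - l) ^ 2 - 4 * g * - l).
  assert (HQ : Q = (1 - g + l)^2 + 4 * g * l) by (unfold Q; ring).
  assert (HQ0 : 0 < Q) by (rewrite HQ; pose proof (pow2_ge_0 (1-g+l)); lra).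
  assert (HS : sqrt Q * sqrt Q = Q) by (apply sqrt_sqrt; lra).
  assert (HS0 : 0 < sqrt Q) by (apply sqrt_lt_R0; lra).
  assert (Hp : p = (sqrt Q - (1 - g + l)) / (2 * g * l)).
  { unfold p, mp_m. fold Q. field. lra. }
  assert (HS2 : sqrt Q ^ 2 = Q) by (unfold pow; rewrite Rmult_1_r; exact HS).
  set (S := sqrt Q) in *.
  assert (HSa : (1 - g + l) < S).
  { destruct (Rlt_or_le (1 - g + l) 0); [lra|].
    destruct (Rlt_or_le (1 - g + l) S); [lra|].
    assert (S * S <= (1 - g + l) * (1 - g + l)) by (apply Rmult_le_compat; lra).
    rewrite HS, HQ in H2. lra. }
  split; [|split].
  - rewrite Hp. apply Rdiv_lt_0_compat; lra.
  - rewrite Hp. field_simplify; [|lra]. 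
    rewrite HS2, HQ. field. lra.
  - rewrite Hp. field. lra.
Qed.

Lemma mp_deriv (g z : R) : 0 < g -> z < 0 ->
  is_derive (mp_m g) z ((g*(mp_m g z)^2 + mp_m g z)/sqrt ((1 - g - z)^2 - 4*g*z)).
Proof. intros. exact (mp_deriv_raw0 g z H H0). Qed.

Lemma E_alt g p : cE g p = 1 + g * p + g * p * cA g p.
Proof. unfold cE, cA. ring. Qed.

Lemma E_pos g p : 0 < g -> 0 <= p -> 0 <= cA g p -> 0 < cE g p.
Proof.
  intros Hg Hp HA. rewrite E_alt.
  assert (0 <= g * p) by nra. assert (0 <= g * p * cA g p) by nra. lra.
Qed.

Lemma B_pos g p : 0 < g -> 0 <= p -> 0 < cB g p.
Proof. intros. unfold cB. nra. Qed.

Lemma mp_main (g l : R) : 0 < g -> 0 < l ->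
  let p := mp_m g (- l) in
  0 < p /\ 0 < cA g p /\ l = lamp g p /\
  Derive (mp_m g) (- l) = (p * cB g p) ^ 2 / cE g p.
Proof.
  intros Hg Hl p.
  destruct (mp_props g l Hg Hl) as [Hp [Hq HS]]. fold p in Hp, Hq, HS.
  assert (HB : 0 < cB g p) by (apply B_pos; lra).
  assert (HAe : cA g p = l * p * cB g p).
  { unfold cA, cB. nra. }
  assert (HA : 0 < cA g p).
  { rewrite HAe. apply Rmult_lt_0_compat; [apply Rmult_lt_0_compat|]; lra. }
  assert (HE : 0 < cE g p) by (apply E_pos; lra).
  assert (Hl' : l = lamp g p).
  { unfold lamp. rewrite HAe. field. split; lra. }
  split; [lra|split; [lra|split; [exact Hl'|]]].
  assert (Hz : - l < 0) by lra.
  rewrite (is_derive_unique _ _ _ (mp_deriv g (- l) Hg Hz)). fold p. rewrite HS.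
  assert (HS0 : 0 < 1 - g + l + 2 * g * l * p).
  { rewrite <- HS. apply sqrt_lt_R0. pose proof (pow2_ge_0 (1-g+l)). assert (0 < g * l) by nra. lra. }
  assert (HSE : (1 - g + l + 2 * g * l * p) * (p * cB g p) = cE g p).
  { rewrite Hl'. unfold lamp, cE. rewrite E_alt in HE. unfold cA, cB in *. field. split; lra. }
  apply (Rmult_eq_reg_r (cE g p)); [|lra].
  rewrite <- HSE at 2. unfold cB. field. unfold cB in HB. repeat split; lra.
Qed.

Lemma mp_inv (g p : R) : 0 < g -> 0 < p -> 0 < cA g p ->
  0 < lamp g p /\ mp_m g (- lamp g p) = p.
Proof.
  intros Hg Hp HA.
  assert (HB : 0 < cB g p) by (apply B_pos; lra).
  assert (Hl : 0 < lamp g p).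
  { unfold lamp. apply Rdiv_lt_0_compat; [lra|]. apply Rmult_lt_0_compat; lra. }
  split; [exact Hl|].
  assert (Hpp : g * lamp g p * p ^ 2 + (1 - g + lamp g p) * p - 1 = 0).
  { unfold lamp, cA. unfold cB in *. field. split; lra. }
  set (l := lamp g p) in *.
  destruct (mp_props g l Hg Hl) as [Hq [Hqq _]].
  set (q := mp_m g (- l)) in *.
  destruct (Req_dec q p) as [E|E]; [exact E|exfalso].
  assert (Hs : g * l * (q + p) + (1 - g + l) = 0).
  { apply (Rmult_eq_reg_l (q - p)); [|lra]. nra. }
  assert (g * l * p * q > 0).
  { apply Rmult_lt_0_compat; [|lra]. apply Rmult_lt_0_compat; [|lra]. nra. }
  nra.
Qed.

Lemma lamp_decr (g p1 p2 : R) : 0 < g -> 0 < p1 -> 0 < cA g p1 -> 0 < p2 -> 0 < cA g p2 ->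
  p1 < p2 -> lamp g p2 < lamp g p1.
Proof.
  intros Hg H1 HA1 H2 HA2 H12.
  assert (HB1 : 0 < cB g p1) by (apply B_pos; lra).
  assert (HB2 : 0 < cB g p2) by (apply B_pos; lra).
  assert (Hd : lamp g p1 - lamp g p2 =
     (p2 - p1) * (1 + g * p1 + g * p2 * cA g p1) / (p1 * cB g p1 * (p2 * cB g p2))).
  { unfold lamp, cA. unfold cB in *. field. repeat split; lra. }
  assert (0 < (p2 - p1) * (1 + g * p1 + g * p2 * cA g p1) / (p1 * cB g p1 * (p2 * cB g p2))).
  { apply Rdiv_lt_0_compat.
    - apply Rmult_lt_0_compat; [lra|].
      assert (0 < g * p1) by nra. assert (0 < g * p2 * cA g p1).
      { apply Rmult_lt_0_compat; [nra|lra]. } lra.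
    - apply Rmult_lt_0_compat; apply Rmult_lt_0_compat; lra. }
  lra.
Qed.

Definition pl g l := mp_m g (- l).

Lemma pl_decr (g l1 l2 : R) : 0 < g -> 0 < l1 -> l1 < l2 -> pl g l2 < pl g l1.
Proof.
  intros Hg H1 H12.
  destruct (mp_main g l1 Hg H1) as [Hp1 [HA1 [E1 _]]].
  destruct (mp_main g l2 Hg ltac:(lra)) as [Hp2 [HA2 [E2 _]]].
  unfold pl.
  destruct (Rlt_or_le (mp_m g (- l2)) (mp_m g (- l1))) as [|Hle]; [assumption|exfalso].
  destruct (Rle_lt_or_eq_dec _ _ Hle) as [Hlt|Heq].
  - pose proof (lamp_decr g _ _ Hg Hp1 HA1 Hp2 HA2 Hlt). lra.
  - rewrite <- Heq in E2. lra.
Qed.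

Definition Phi rt2 st2 om2 eta g p :=
  om2 + rt2 * (cA g p ^ 2 / cE g p) - 2 * (om2 + eta) * (cA g p / cB g p)
  + st2 * g * (p ^ 2 / cE g p) + st2 + om2.

Lemma risk_Phi rt2 st2 om2 eta g l : 0 < g -> 0 < l ->
  causal_risk rt2 st2 om2 eta g l = Phi rt2 st2 om2 eta g (pl g l).
Proof.
  intros Hg Hl.
  destruct (mp_main g l Hg Hl) as [Hp [HA [El ED]]].
  unfold causal_risk. rewrite ED. unfold pl. set (p := mp_m g (- l)) in *.
  assert (HB : 0 < cB g p) by (apply B_pos; lra).
  assert (HE : 0 < cE g p) by (apply E_pos; lra).
  fold p.
  rewrite El. unfold Phi, lamp. unfold cA, cB, cE in *. field. repeat split; lra.
Qed.

Definition Zf g s p := cB g p ^ 2 * (cA g p - s * g * p * cB g p) / cE g p ^ 2.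
Definition q1 g p := -1 - g + 3 * p * g * (1 - g) - 3 * p^2 * g * (1 - g)^2 - p^3 * g^2 * (1-g)^2.
Definition q2 g p := 1 + 4*p*g + 3*p^2*g + 6*p^2*g^2 + 6*p^3*g^2 + 4*p^3*g^3 + 3*p^4*g^3 + p^4*g^4.
Definition Zd g s p := (cB g p * q1 g p - s * g * q2 g p) / cE g p ^ 3.

Lemma Zf_deriv g s p : cE g p <> 0 -> is_derive (Zf g s) p (Zd g s p).
Proof.
  intros HE. unfold Zf, Zd, q1, q2, cA, cB. unfold cE in *.
  auto_derive. { nz. }
  field. exact HE.
Qed.

Lemma Phi_deriv rt2 st2 om2 eta g p : 0 < rt2 -> cE g p <> 0 -> cB g p <> 0 ->
  is_derive (Phi rt2 st2 om2 eta g) p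
    (2 / cB g p ^ 2 * ((om2 + eta) - rt2 * Zf g (st2 / rt2) p)).
Proof.
  intros Hr HE HB. unfold Phi, Zf, cA. unfold cB, cE in *.
  auto_derive. { repeat split; nz. }
  field. repeat split; auto. lra.
Qed.

Lemma q1_neg g p : 0 < g -> 0 <= p -> q1 g p < 0.
Proof.
  intros Hg Hp.
  set (t := (1 - g) * p).
  assert (Hq : q1 g p = -1 - g * (1 - 3 * t + 3 * t^2) - g^2 * p * t^2) by (unfold q1, t; ring).
  rewrite Hq.
  assert (0 < 1 - 3 * t + 3 * t^2) by (pose proof (pow2_ge_0 (t - /2)); nra).
  assert (0 <= g^2 * p * t^2).
  { apply Rmult_le_pos; [apply Rmult_le_pos; [nra|lra]|apply pow2_ge_0]. }
  assert (0 < g * (1 - 3 * t + 3 * t^2)) by nra.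
  lra.
Qed.

Lemma q2_pos g p : 0 < g -> 0 <= p -> 0 < q2 g p.
Proof.
  intros Hg Hp. unfold q2.
  assert (0 <= p * g) by nra.
  assert (0 <= p^2 * g) by (apply Rmult_le_pos; [apply pow2_ge_0|lra]).
  assert (0 <= p^2 * g^2) by (apply Rmult_le_pos; apply pow2_ge_0).
  assert (0 <= p^3 * g^2) by (apply Rmult_le_pos; [apply pow_le; lra|apply pow2_ge_0]).
  assert (0 <= p^3 * g^3) by (apply Rmult_le_pos; apply pow_le; lra).
  assert (0 <= p^4 * g^3) by (apply Rmult_le_pos; apply pow_le; lra).
  assert (0 <= p^4 * g^4) by (apply Rmult_le_pos; apply pow_le; lra).
  lra.
Qed.

Lemma div_neg x y : x < 0 -> 0 < y -> x / y < 0.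
Proof. intros. unfold Rdiv. pose proof (Rinv_0_lt_compat y H0). nra. Qed.

Lemma Zd_neg g s p : 0 < g -> 0 < s -> 0 <= p -> 0 <= cA g p -> Zd g s p < 0.
Proof.
  intros Hg Hs Hp HA. unfold Zd.
  pose proof (E_pos g p Hg Hp HA) as HE. pose proof (B_pos g p Hg Hp) as HB.
  pose proof (q1_neg g p Hg Hp). pose proof (q2_pos g p Hg Hp).
  apply div_neg; [|apply pow_lt; lra].
  assert (0 < s * g * q2 g p) by (apply Rmult_lt_0_compat; [nra|lra]).
  nra.
Qed.

Lemma decr_strict f df a b : a < b ->
  (forall x, a <= x <= b -> is_derive f x (df x)) ->
  (forall x, a < x < b -> df x < 0) -> f b < f a.
Proof.
  intros Hab Hd Hs.
  destruct (MVT_cor2 f df a b Hab) as [c [Hc Hc2]].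
  { intros c Hc. apply is_derive_Reals. apply Hd. lra. }
  pose proof (Hs c Hc2). nra.
Qed.

Lemma incr_strict f df a b : a < b ->
  (forall x, a <= x <= b -> is_derive f x (df x)) ->
  (forall x, a < x < b -> 0 < df x) -> f a < f b.
Proof.
  intros Hab Hd Hs.
  destruct (MVT_cor2 f df a b Hab) as [c [Hc Hc2]].
  { intros c Hc. apply is_derive_Reals. apply Hd. lra. }
  pose proof (Hs c Hc2). nra.
Qed.

Lemma cA_between g a b x : a <= x <= b -> 0 <= cA g a -> 0 <= cA g b -> 0 <= cA g x.
Proof.
  intros Hx Ha Hb. unfold cA in *.
  destruct (Rle_or_lt 0 (1 - g)); nra.
Qed.

Lemma Zf_decr g s a b : 0 < g -> 0 < s -> 0 <= a -> a < b -> 0 <= cA g a -> 0 <= cA g b ->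
  Zf g s b < Zf g s a.
Proof.
  intros Hg Hs Ha Hab HAa HAb.
  apply (decr_strict _ (Zd g s)); [lra| |].
  - intros x Hx. apply Zf_deriv.
    assert (0 < cE g x) by (apply E_pos; [lra|lra|apply (cA_between g a b); auto]). lra.
  - intros x Hx. apply Zd_neg; [lra|lra|lra|apply (cA_between g a b); auto; lra].
Qed.

Lemma Zf_0 g s : Zf g s 0 = 1.
Proof. unfold Zf, cA, cB, cE. field. Qed.

Lemma Zf_lt1 g s p : 0 < g -> 0 < s -> 0 < p -> 0 < cA g p -> Zf g s p < 1.
Proof.
  intros. rewrite <- (Zf_0 g s). apply Zf_decr; try lra. unfold cA; lra.
Qed.

Definition rv g s := - s * (g * Rmax 1 g / (1 - g) ^ 2).

Definition T2d d p := 1 + d + 4*p + 8*p*d + 3*p*d^2 + 4*p^2 + 14*p^2*d + 13*p^2*d^2 + 3*p^2*d^3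
  + 4*p^3*d + 9*p^3*d^2 + 6*p^3*d^3 + p^3*d^4.

Lemma T2d_pos d p : 0 < d -> 0 <= p -> 0 < T2d d p.
Proof.
  intros Hd Hp. unfold T2d.
  assert (forall i j, 0 <= p ^ i * d ^ j) by (intros; apply Rmult_le_pos; apply pow_le; lra).
  pose proof (H 1%nat 0%nat). pose proof (H 1%nat 1%nat). pose proof (H 1%nat 2%nat).
  pose proof (H 2%nat 0%nat). pose proof (H 2%nat 1%nat). pose proof (H 2%nat 2%nat). pose proof (H 2%nat 3%nat).
  pose proof (H 3%nat 1%nat). pose proof (H 3%nat 2%nat). pose proof (H 3%nat 3%nat). pose proof (H 3%nat 4%nat).
  simpl in *. nra.
Qed.

Lemma Zf_gt_rho g s p : 0 < g -> g <> 1 -> 0 < s -> 0 < p -> 0 < cA g p -> rv g s < Zf g s p.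
Proof.
  intros Hg Hg1 Hs Hp HA.
  destruct (Rlt_or_le g 1) as [Hlt|Hge].
  - assert (Hm : Rmax 1 g = 1) by (apply Rmax_left; lra).
    set (m0 := / (1 - g)).
    assert (Hm0 : Zf g s m0 = rv g s).
    { unfold Zf, rv, m0, cA, cB, cE. rewrite Hm. field. lra. }
    rewrite <- Hm0. apply Zf_decr; try lra.
    + unfold cA in HA. unfold m0. apply (Rmult_lt_reg_l (1 - g)); [lra|]. field_simplify; lra.
    + unfold cA, m0. right. field. lra.
  - assert (Hgt : 1 < g) by (destruct Hge; [auto|congruence]).
    assert (Hm : Rmax 1 g = g) by (apply Rmax_right; lra).
    assert (HB : 0 < cB g p) by (apply B_pos; lra).
    assert (HE : 0 < cE g p) by (apply E_pos; lra).
    assert (HT : g * cE g p ^ 2 - (1 - g) ^ 2 * p * cB g p ^ 3 = T2d (g - 1) p).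
    { unfold cE, cB, T2d. ring. }
    assert (Hd : Zf g s p - rv g s = ((g - 1)^2 * cA g p * cB g p ^ 2 + s * g * T2d (g - 1) p) / ((g - 1)^2 * cE g p ^ 2)).
    { rewrite <- HT. unfold Zf, rv. rewrite Hm. unfold cA, cB, cE in *. field. split; lra. }
    assert (0 < ((g - 1)^2 * cA g p * cB g p ^ 2 + s * g * T2d (g - 1) p) / ((g - 1)^2 * cE g p ^ 2)).
    { apply Rdiv_lt_0_compat.
      - pose proof (T2d_pos (g - 1) p ltac:(lra) ltac:(lra)).
        assert (0 < (g - 1)^2) by (apply pow_lt; lra).
        assert (0 < (g - 1)^2 * cA g p * cB g p ^ 2).
        { apply Rmult_lt_0_compat; [apply Rmult_lt_0_compat; lra| apply pow_lt; lra]. }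
        assert (0 < s * g * T2d (g - 1) p) by (apply Rmult_lt_0_compat; [nra|lra]).
        lra.
      - apply Rmult_lt_0_compat; apply pow_lt; lra. }
    lra.
Qed.

Lemma der_cont f x l : is_derive f x l -> continuity_pt f x.
Proof.
  intro H. apply is_derive_Reals in H.
  apply (derivable_continuous_pt f x (exist _ l H)).
Qed.

Definition Zh g s u := (u + g) ^ 2 * (u * (u + (g - 1)) - s * g * (u + g)) / (u ^ 2 + 2 * g * u + g * (g - 1)) ^ 2.

Lemma Zh_eq g s u : 1 < g -> 0 < u -> Zf g s (/ u) = Zh g s u.
Proof.
  intros Hg Hu. unfold Zf, Zh, cA, cB, cE.
  assert (0 < u ^ 2 + 2 * g * u + g * (g - 1)).
  { assert (0 < u^2) by (apply pow_lt; lra). assert (0 < g * u) by nra. assert (0 < g * (g - 1)) by nra. lra. }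
  field. split; lra.
Qed.

Lemma Zh_cont g s : 1 < g -> continuity_pt (Zh g s) 0.
Proof.
  intros Hg. apply (der_cont _ _ (Derive (Zh g s) 0)).
  assert (Hnz : 0 ^ 2 + 2 * g * 0 + g * (g - 1) <> 0).
  { assert (0 < g * (g - 1)) by nra. simpl. lra. }
  assert (ex_derive (Zh g s) 0).
  { unfold Zh. auto_derive. nz. }
  apply Derive_correct. exact H.
Qed.

Lemma Zh_0 g s : 1 < g -> Zh g s 0 = rv g s.
Proof.
  intros Hg. unfold Zh, rv. rewrite Rmax_right by lra. field. split; lra.
Qed.

Definition rhoB g s : Rbar := if Req_EM_T g 1 then m_infty else Finite (rv g s).

Lemma low_point g s z : 0 < g -> 0 < s -> Rbar_lt (rhoB g s) (Finite z) -> z < 1 ->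
  exists q, 0 < q /\ 0 <= cA g q /\ Zf g s q <= z /\ (Zf g s q = z -> 0 < cA g q).
Proof.
  intros Hg Hs Hz Hz1. unfold rhoB in Hz.
  destruct (Req_EM_T g 1) as [Hg1|Hg1].
  - subst g. exists (4 * (1 - z) / s + 4 + 4 / s).
    set (q := 4 * (1 - z) / s + 4 + 4 / s).
    assert (Hq : 0 < q).
    { unfold q. assert (0 < 4 * (1 - z) / s) by (apply Rdiv_lt_0_compat; lra).
      assert (0 < 4 / s) by (apply Rdiv_lt_0_compat; lra). lra. }
    assert (HA : cA 1 q = 1) by (unfold cA; ring).
    assert (Hsq : s * q = 4 * (1 - z) + 4 * s + 4) by (unfold q; field; lra).
    assert (HD : 0 < (1 + 2 * q) ^ 2) by (apply pow_lt; lra).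
    assert (HZ : Zf 1 s q * (1 + 2 * q) ^ 2 = (1 + q) ^ 2 - s * q * (1 + q) ^ 3).
    { unfold Zf, cA, cB, cE. field. lra. }
    assert (HZ2 : Zf 1 s q <= 1 - s * q / 4).
    { apply (Rmult_le_reg_r ((1 + 2 * q) ^ 2)); [lra|]. rewrite HZ.
      assert (H1 : (1 + q) ^ 2 <= (1 + 2 * q) ^ 2) by (apply pow_incr; lra).
      assert (H2 : (1 + 2 * q) ^ 2 <= 4 * (1 + q) ^ 3).
      { assert (H3: (1 + 2 * q) ^ 2 <= 4 * (1 + q) ^ 2) by nra.
        assert (H4: (1 + q) ^ 2 <= (1 + q) ^ 3) by (simpl; nra). lra. }
      assert (0 < s * q) by nra.
      nra. }
    rewrite HA. split; [lra|split; [lra|split; [|intro; lra]]].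
    simpl in Hz. lra.
  - simpl in Hz. destruct (Rlt_or_le g 1) as [Hlt|Hge].
    + exists (/ (1 - g)).
      assert (Hm0 : Zf g s (/ (1 - g)) = rv g s).
      { unfold Zf, rv, cA, cB, cE. rewrite Rmax_left by lra. field. lra. }
      assert (HA0 : cA g (/ (1 - g)) = 0) by (unfold cA; field; lra).
      split; [apply Rinv_0_lt_compat; lra|]. rewrite Hm0, HA0. split; [lra|]. split; [lra|]. intro; lra.
    + assert (Hgt : 1 < g) by (destruct Hge; [auto|congruence]).
      pose proof (Zh_cont g s Hgt) as Hc.
      destruct (Hc (z - rv g s) ltac:(lra)) as [del [Hdel Hd]].
      set (u := del / 2).
      assert (Hu : 0 < u) by (unfold u; lra).
      pose proof (Hd u) as Hdu. simpl in Hdu. unfold R_dist, D_x, no_cond in Hdu.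
      rewrite Zh_0 in Hdu by lra.
      assert (Hlt : Rabs (Zh g s u - rv g s) < z - rv g s).
      { apply Hdu. split; [split; [auto|lra]|]. rewrite Rminus_0_r, Rabs_pos_eq; unfold u; lra. }
      exists (/ u). rewrite Zh_eq by lra.
      assert (HA : 0 < cA g (/ u)).
      { unfold cA. assert (0 < / u) by (apply Rinv_0_lt_compat; lra). nra. }
      split; [apply Rinv_0_lt_compat; lra|]. split; [lra|]. split; [|intro; lra].
      apply Rabs_def2 in Hlt. lra.
Qed.

Lemma inf_exists (f : R -> R) m : (forall x, 0 < x -> m <= f x) ->
  exists L, (forall x, 0 < x -> L <= f x) /\ (forall eps, 0 < eps -> exists x, 0 < x /\ f x < L + eps).
Proof.
  intros Hm.
  set (E := fun y => exists x, 0 < x /\ y = - f x).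
  assert (Hb : bound E).
  { exists (- m). intros y [x [Hx ->]]. pose proof (Hm x Hx). lra. }
  assert (Hne : exists y, E y) by (exists (- f 1); exists 1; split; [lra|auto]).
  destruct (completeness E Hb Hne) as [l [Hl1 Hl2]].
  exists (- l). split.
  - intros x Hx. assert (E (- f x)) by (exists x; split; auto). pose proof (Hl1 _ H). lra.
  - intros eps He. apply NNPP. intro Hn.
    assert (Hub : is_upper_bound E (l - eps)).
    { intros y [x [Hx ->]].
      destruct (Rlt_or_le (f x) (- l + eps)) as [Hlt|Hle].
      - exfalso. apply Hn. exists x. split; auto.
      - lra. }
    pose proof (Hl2 _ Hub). lra.
Qed.

Lemma lim_right0 (f : R -> R) m : (forall x y, 0 < x -> x < y -> f x < f y) ->
  (forall x, 0 < x -> m <= f x) ->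
  exists L, (forall mu, 0 < mu -> L < f mu) /\ filterlim f (at_right 0) (locally L).
Proof.
  intros Hi Hm. destruct (inf_exists f m Hm) as [L [HL1 HL2]].
  exists L. split.
  - intros mu Hmu. pose proof (HL1 (mu / 2) ltac:(lra)). pose proof (Hi (mu/2) mu ltac:(lra) ltac:(lra)). lra.
  - apply filterlim_locally. intros eps.
    destruct (HL2 eps (cond_pos eps)) as [x0 [Hx0 Hf0]].
    exists (mkposreal x0 Hx0). intros y Hy Hy0.
    change (Rabs (y - 0) < x0) in Hy. rewrite Rminus_0_r, Rabs_pos_eq in Hy by lra.
    change (Rabs (f y - L) < eps). pose proof (HL1 y Hy0). pose proof (Hi y x0 Hy0 Hy).
    rewrite Rabs_pos_eq; lra.
Qed.

Lemma lim_infty (f : R -> R) m : (forall x y, 0 < x -> x < y -> f y < f x) ->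
  (forall x, 0 < x -> m <= f x) ->
  exists L, (forall mu, 0 < mu -> L < f mu) /\ filterlim f (Rbar_locally p_infty) (locally L).
Proof.
  intros Hi Hm. destruct (inf_exists f m Hm) as [L [HL1 HL2]].
  exists L. split.
  - intros mu Hmu. pose proof (HL1 (mu + 1) ltac:(lra)). pose proof (Hi mu (mu + 1) ltac:(lra) ltac:(lra)). lra.
  - apply filterlim_locally. intros eps.
    destruct (HL2 eps (cond_pos eps)) as [x0 [Hx0 Hf0]].
    exists x0. intros y Hy.
    change (Rabs (f y - L) < eps). pose proof (HL1 y ltac:(lra)). pose proof (Hi x0 y Hx0 Hy).
    rewrite Rabs_pos_eq; lra.
Qed.

Lemma rng_between g a b x : 0 < a -> 0 < cA g a -> 0 < cA g b -> a <= x <= b -> 0 < x /\ 0 < cA g x.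
Proof.
  intros Ha HAa HAb Hx. split; [lra|]. unfold cA in *.
  destruct (Rle_or_lt 0 (1 - g)); nra.
Qed.

Lemma Zf_surj g s z : 0 < g -> 0 < s -> Rbar_lt (rhoB g s) (Finite z) -> z < 1 ->
  exists p, 0 < p /\ 0 < cA g p /\ Zf g s p = z.
Proof.
  intros Hg Hs Hz Hz1.
  destruct (low_point g s z Hg Hs Hz Hz1) as [q [Hq [HAq [HZq Himp]]]].
  destruct (Rle_lt_or_eq_dec _ _ HZq) as [Hlt|Heq]; [|exists q; auto].
  assert (Hc : forall a, 0 <= a <= q -> continuity_pt (fun x => z - Zf g s x) a).
  { intros a Ha.
    assert (HAa : 0 <= cA g a) by (apply (cA_between g 0 q); [lra|unfold cA; lra|lra]).
    apply continuity_pt_minus; [apply continuity_pt_const; intros u v; auto|].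
    apply (der_cont _ _ (Zd g s a)). apply Zf_deriv.
    pose proof (E_pos g a Hg ltac:(lra) HAa). lra. }
  destruct (IVT_interv (fun x => z - Zf g s x) 0 q Hc Hq) as [x [Hx Hfx]].
  { rewrite Zf_0. lra. }
  { lra. }
  assert (Hx0 : x <> 0) by (intro; subst x; rewrite Zf_0 in Hfx; lra).
  assert (Hxq : x <> q) by (intro; subst x; lra).
  exists x. split; [lra|]. split; [|lra].
  unfold cA in *. destruct (Rle_or_lt (1 - g) 0); nra.
Qed.

Lemma Zf_inj g s p1 p2 : 0 < g -> 0 < s -> 0 < p1 -> 0 < cA g p1 -> 0 < p2 -> 0 < cA g p2 ->
  Zf g s p1 = Zf g s p2 -> p1 = p2.
Proof.
  intros Hg Hs H1 HA1 H2 HA2 E.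
  destruct (Rtotal_order p1 p2) as [Hl|[He|Hl]]; auto.
  - pose proof (Zf_decr g s p1 p2 Hg Hs ltac:(lra) Hl ltac:(lra) ltac:(lra)). lra.
  - pose proof (Zf_decr g s p2 p1 Hg Hs ltac:(lra) Hl ltac:(lra) ltac:(lra)). lra.
Qed.

Lemma Phi_lb rt2 st2 om2 eta g p : 0 < rt2 -> 0 < st2 -> 0 < g -> 0 < p -> 0 < cA g p ->
  om2 - 2 * Rabs (om2 + eta) + st2 + om2 <= Phi rt2 st2 om2 eta g p.
Proof.
  intros Hr Hs Hg Hp HA. unfold Phi.
  pose proof (E_pos g p Hg ltac:(lra) ltac:(lra)) as HE.
  pose proof (B_pos g p Hg ltac:(lra)) as HB.
  assert (H1 : 0 <= rt2 * (cA g p ^ 2 / cE g p)).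
  { apply Rmult_le_pos; [lra|]. apply Rdiv_le_0_compat; [apply pow2_ge_0|lra]. }
  assert (H2 : 0 <= st2 * g * (p ^ 2 / cE g p)).
  { apply Rmult_le_pos; [nra|]. apply Rdiv_le_0_compat; [apply pow2_ge_0|lra]. }
  assert (H3 : 0 <= cA g p / cB g p <= 1).
  { split; [apply Rdiv_le_0_compat; lra|].
    apply (Rmult_le_reg_r (cB g p)); [lra|]. field_simplify; [|lra].
    unfold cA, cB. lra. }
  assert (H4 : (om2 + eta) * (cA g p / cB g p) <= Rabs (om2 + eta)).
  { destruct (Rle_or_lt 0 (om2 + eta)).
    - rewrite Rabs_pos_eq by lra. nra.
    - rewrite Rabs_left by lra. nra. }
  lra.
Qed.

Definition dPhi rt2 st2 om2 eta g p := 2 / cB g p ^ 2 * ((om2 + eta) - rt2 * Zf g (st2 / rt2) p).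

Lemma Phi_decr_on rt2 st2 om2 eta g a b : 0 < rt2 -> 0 < g -> 0 < a -> 0 < cA g a -> 0 < cA g b -> a < b ->
  (forall x, a < x < b -> dPhi rt2 st2 om2 eta g x < 0) ->
  Phi rt2 st2 om2 eta g b < Phi rt2 st2 om2 eta g a.
Proof.
  intros Hr Hg Ha HAa HAb Hab Hd.
  apply (decr_strict _ (dPhi rt2 st2 om2 eta g)); auto.
  intros x Hx. destruct (rng_between g a b x Ha HAa HAb Hx).
  pose proof (E_pos g x Hg ltac:(lra) ltac:(lra)). pose proof (B_pos g x Hg ltac:(lra)).
  apply Phi_deriv; lra.
Qed.

Lemma Phi_incr_on rt2 st2 om2 eta g a b : 0 < rt2 -> 0 < g -> 0 < a -> 0 < cA g a -> 0 < cA g b -> a < b ->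
  (forall x, a < x < b -> 0 < dPhi rt2 st2 om2 eta g x) ->
  Phi rt2 st2 om2 eta g a < Phi rt2 st2 om2 eta g b.
Proof.
  intros Hr Hg Ha HAa HAb Hab Hd.
  apply (incr_strict _ (dPhi rt2 st2 om2 eta g)); auto.
  intros x Hx. destruct (rng_between g a b x Ha HAa HAb Hx).
  pose proof (E_pos g x Hg ltac:(lra) ltac:(lra)). pose proof (B_pos g x Hg ltac:(lra)).
  apply Phi_deriv; lra.
Qed.

Lemma dPhi_sign rt2 st2 om2 eta g p : 0 < rt2 -> 0 < g -> 0 <= p ->
  (dPhi rt2 st2 om2 eta g p < 0 <-> (om2 + eta) / rt2 < Zf g (st2 / rt2) p) /\
  (0 < dPhi rt2 st2 om2 eta g p <-> Zf g (st2 / rt2) p < (om2 + eta) / rt2).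
Proof.
  intros Hr Hg Hp. unfold dPhi.
  pose proof (B_pos g p Hg Hp) as HB.
  assert (HK : 0 < 2 / cB g p ^ 2) by (apply Rdiv_lt_0_compat; [lra|apply pow_lt; lra]).
  set (Z := Zf g (st2 / rt2) p).
  assert (Hz : (om2 + eta) - rt2 * Z = rt2 * ((om2 + eta) / rt2 - Z)) by (field; lra).
  rewrite Hz. split; split; intro H.
  - assert ((om2 + eta) / rt2 - Z < 0); [|lra].
    destruct (Rle_or_lt 0 ((om2 + eta) / rt2 - Z)); [|auto]. exfalso.
    assert (0 <= 2 / cB g p ^ 2 * (rt2 * ((om2 + eta) / rt2 - Z))) by (apply Rmult_le_pos; [lra|nra]). lra.
  - assert (0 < rt2 * (Z - (om2 + eta) / rt2)) by (apply Rmult_lt_0_compat; lra). nra.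
  - assert (0 < (om2 + eta) / rt2 - Z); [|lra].
    destruct (Rle_or_lt ((om2 + eta) / rt2 - Z) 0); [|auto]. exfalso.
    assert (rt2 * ((om2 + eta) / rt2 - Z) <= 0) by nra. nra.
  - assert (0 < rt2 * ((om2 + eta) / rt2 - Z)) by (apply Rmult_lt_0_compat; lra). nra.
Qed.

Lemma risk_incr rt2 st2 om2 eta g : 0 < rt2 -> 0 < g ->
  (forall p, 0 < p -> 0 < cA g p -> dPhi rt2 st2 om2 eta g p < 0) ->
  forall x y, 0 < x -> x < y -> causal_risk rt2 st2 om2 eta g x < causal_risk rt2 st2 om2 eta g y.
Proof.
  intros Hr Hg Hd x y Hx Hxy.
  rewrite !risk_Phi by lra.
  pose proof (pl_decr g x y Hg Hx Hxy).
  destruct (mp_main g x Hg Hx) as [Hpx [HAx _]].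
  destruct (mp_main g y Hg ltac:(lra)) as [Hpy [HAy _]].
  apply Phi_decr_on; unfold pl; auto.
  intros u Hu. destruct (rng_between g (mp_m g (- y)) (mp_m g (- x)) u Hpy HAy HAx ltac:(lra)).
  apply Hd; auto.
Qed.

Lemma risk_decr rt2 st2 om2 eta g : 0 < rt2 -> 0 < g ->
  (forall p, 0 < p -> 0 < cA g p -> 0 < dPhi rt2 st2 om2 eta g p) ->
  forall x y, 0 < x -> x < y -> causal_risk rt2 st2 om2 eta g y < causal_risk rt2 st2 om2 eta g x.
Proof.
  intros Hr Hg Hd x y Hx Hxy.
  rewrite !risk_Phi by lra.
  pose proof (pl_decr g x y Hg Hx Hxy).
  destruct (mp_main g x Hg Hx) as [Hpx [HAx _]].
  destruct (mp_main g y Hg ltac:(lra)) as [Hpy [HAy _]].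
  apply Phi_incr_on; unfold pl; auto.
  intros u Hu. destruct (rng_between g (mp_m g (- y)) (mp_m g (- x)) u Hpy HAy HAx ltac:(lra)).
  apply Hd; auto.
Qed.

Lemma risk_lb rt2 st2 om2 eta g : 0 < rt2 -> 0 < st2 -> 0 < g ->
  forall x, 0 < x -> om2 - 2 * Rabs (om2 + eta) + st2 + om2 <= causal_risk rt2 st2 om2 eta g x.
Proof.
  intros Hr Hs Hg x Hx. rewrite risk_Phi by lra.
  destruct (mp_main g x Hg Hx) as [Hpx [HAx _]].
  apply Phi_lb; auto.
Qed.

Lemma Phi_min rt2 st2 om2 eta g ps : 0 < rt2 -> 0 < st2 -> 0 < g -> 0 < ps -> 0 < cA g ps ->
  Zf g (st2 / rt2) ps = (om2 + eta) / rt2 ->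
  forall q, 0 < q -> 0 < cA g q -> q <> ps -> Phi rt2 st2 om2 eta g ps < Phi rt2 st2 om2 eta g q.
Proof.
  intros Hr Hs Hg Hp HA HZ q Hq HAq Hne.
  assert (Hs' : 0 < st2 / rt2) by (apply Rdiv_lt_0_compat; lra).
  destruct (Rtotal_order q ps) as [Hl|[He|Hl]]; [| congruence |].
  - apply Phi_decr_on; auto.
    intros x Hx. apply (proj1 (dPhi_sign rt2 st2 om2 eta g x Hr Hg ltac:(lra))).
    rewrite <- HZ. destruct (rng_between g q ps x Hq HAq HA ltac:(lra)).
    apply Zf_decr; lra.
  - apply Phi_incr_on; auto.
    intros x Hx. apply (proj2 (dPhi_sign rt2 st2 om2 eta g x Hr Hg ltac:(lra))).
    rewrite <- HZ. destruct (rng_between g ps q x Hp HA HAq ltac:(lra)).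
    apply Zf_decr; lra.
Qed.

Definition pstar g s z := epsilon (inhabits 0) (fun p => 0 < p /\ 0 < cA g p /\ Zf g s p = z).

Definition inZ g s z := Rbar_lt (rhoB g s) (Finite z) /\ z < 1.

Lemma pstar_spec g s z : 0 < g -> 0 < s -> inZ g s z ->
  0 < pstar g s z /\ 0 < cA g (pstar g s z) /\ Zf g s (pstar g s z) = z.
Proof.
  intros Hg Hs [H1 H2]. unfold pstar. apply epsilon_spec. apply Zf_surj; auto.
Qed.

Lemma pstar_decr g s z1 z2 : 0 < g -> 0 < s -> inZ g s z1 -> inZ g s z2 -> z1 < z2 ->
  pstar g s z2 < pstar g s z1.
Proof.
  intros Hg Hs H1 H2 H12.
  destruct (pstar_spec g s z1 Hg Hs H1) as [P1 [A1 Z1]].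
  destruct (pstar_spec g s z2 Hg Hs H2) as [P2 [A2 Z2]].
  destruct (Rtotal_order (pstar g s z2) (pstar g s z1)) as [Hl|[He|Hl]]; auto.
  - rewrite He in Z2. lra.
  - pose proof (Zf_decr g s (pstar g s z1) (pstar g s z2) Hg Hs ltac:(lra) Hl ltac:(lra) ltac:(lra)). lra.
Qed.

Lemma inZ_between g s z1 z2 z : inZ g s z1 -> inZ g s z2 -> z1 <= z <= z2 -> inZ g s z.
Proof.
  intros [H1 _] [_ H2] Hz. split; [|lra].
  apply (Rbar_lt_le_trans _ _ _ H1). simpl. lra.
Qed.

Lemma inZ_lower g s z : inZ g s z -> exists z1, inZ g s z1 /\ z1 < z.
Proof.
  unfold inZ, rhoB in *. intros [H1 H2]. destruct (Req_EM_T g 1).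
  - exists (z - 1). split; [split; simpl; auto; lra|lra].
  - simpl in H1. exists ((rv g s + z) / 2). split; [split; simpl; lra|lra].
Qed.

Lemma lamp_deriv g p : 0 < g -> 0 < p ->
  is_derive (lamp g) p (- cE g p / (p * cB g p) ^ 2).
Proof.
  intros Hg Hp. pose proof (B_pos g p Hg ltac:(lra)) as HB.
  unfold lamp, cA, cE. unfold cB in *.
  auto_derive. { repeat split; try nz; try lra. }
  field. split; lra.
Qed.

Lemma pstar_deriv g s z : 0 < g -> 0 < s -> inZ g s z ->
  is_derive (pstar g s) z (1 / Zd g s (pstar g s z)).
Proof.
  intros Hg Hs Hz.
  destruct (inZ_lower g s z Hz) as [z1 [Hz1 H1]].
  set (z2 := (z + 1) / 2).
  assert (Hzl : z < 1) by (destruct Hz; auto).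
  assert (Hz2 : inZ g s z2).
  { split; [apply (Rbar_lt_le_trans _ _ _ (proj1 Hz)); simpl; unfold z2; lra | unfold z2; lra]. }
  assert (H2 : z < z2) by (unfold z2; lra).
  set (f := fun p => - Zf g s p).
  set (G := fun y => pstar g s (- y)).
  destruct (pstar_spec g s z1 Hg Hs Hz1) as [P1 [A1 Z1]].
  destruct (pstar_spec g s z2 Hg Hs Hz2) as [P2 [A2 Z2]].
  destruct (pstar_spec g s z Hg Hs Hz) as [P0 [A0 Z0]].
  set (p1 := pstar g s z1) in *. set (p2 := pstar g s z2) in *.
  assert (Hp21 : p2 < p1) by (apply pstar_decr; auto; lra).
  assert (Hin : forall x, - z2 <= x <= - z1 -> inZ g s (- x)).
  { intros x Hx. apply (inZ_between g s z1 z2); auto. lra. }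
  assert (Hmon : forall u, z1 <= u <= z2 -> p2 <= pstar g s u <= p1).
  { intros u Hu.
    assert (Hu' : inZ g s u) by (apply (inZ_between g s z1 z2); auto).
    split.
    - destruct (Rle_lt_or_eq_dec _ _ (proj2 Hu)) as [Hl|He]; [|rewrite He; unfold p2; lra].
      left. apply pstar_decr; auto.
    - destruct (Rle_lt_or_eq_dec _ _ (proj1 Hu)) as [Hl|He]; [|rewrite <- He; unfold p1; lra].
      left. apply pstar_decr; auto. }
  assert (HGr : forall x, - z2 <= x <= - z1 -> p2 <= G x <= p1).
  { intros x Hx. unfold G. apply Hmon. lra. }
  assert (Hrng : forall a, p2 <= a <= p1 -> 0 < a /\ 0 < cA g a).
  { intros a Ha. apply (rng_between g p2 p1); auto. }
  assert (Hfd : forall a, p2 <= a <= p1 -> is_derive f a (- Zd g s a)).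
  { intros a Ha. destruct (Hrng a Ha) as [Ha1 Ha2].
    assert (HE : 0 < cE g a) by (apply E_pos; lra).
    apply (is_derive_opp (Zf g s)). apply Zf_deriv. lra. }
  assert (Hcomp : forall x, - z2 <= x <= - z1 -> comp f G x = id x).
  { intros x Hx. unfold comp, id, f, G.
    destruct (pstar_spec g s (- x) Hg Hs (Hin x Hx)) as [_ [_ HZ]]. rewrite HZ. ring. }
  assert (Hfp1 : f p1 = - z1) by (unfold f; rewrite Z1; ring).
  assert (Hfp2 : f p2 = - z2) by (unfold f; rewrite Z2; ring).
  assert (Hcont : continuity_pt G (- z)).
  { apply (continuity_pt_recip_interv f G p2 p1 Hp21).
    - intros x y Hx Hxy Hy. unfold f.
      destruct (Hrng x ltac:(lra)). destruct (Hrng y ltac:(lra)).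
      pose proof (Zf_decr g s x y Hg Hs ltac:(lra) Hxy ltac:(lra) ltac:(lra)). lra.
    - intros x Hx1 Hx2. apply Hcomp. lra.
    - intros x Hx1 Hx2. apply HGr. lra.
    - intros a Ha. apply (der_cont _ _ _ (Hfd a Ha)).
    - lra. }
  assert (Prf : forall a, G (- z2) <= a <= G (- z1) -> derivable_pt f a).
  { intros a Ha. unfold G in Ha. rewrite !Ropp_involutive in Ha. fold p1 p2 in Ha.
    exists (- Zd g s a). apply is_derive_Reals. apply Hfd. exact Ha. }
  assert (Prg : G (- z2) <= G (- z) <= G (- z1)).
  { unfold G. rewrite !Ropp_involutive. fold p1 p2. apply Hmon. lra. }
  assert (HGz : G (- z) = pstar g s z) by (unfold G; rewrite Ropp_involutive; auto).
  assert (Hd0 : derive_pt f (G (- z)) (Prf (G (- z)) Prg) = - Zd g s (pstar g s z)).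
  { apply derive_pt_eq_0. rewrite HGz. apply is_derive_Reals. apply Hfd.
    apply Hmon. lra. }
  assert (HZd : Zd g s (pstar g s z) < 0) by (apply Zd_neg; lra).
  pose proof (derivable_pt_lim_recip_interv f G (- z2) (- z1) (- z) Prf Hcont ltac:(lra) ltac:(lra)
     Prg ltac:(intros; apply Hcomp; lra) ltac:(rewrite Hd0; lra)) as HG.
  rewrite Hd0 in HG. apply is_derive_Reals in HG.
  assert (Hop : is_derive (fun x : R => - x) z (-1)) by (auto_derive; auto; ring).
  pose proof (is_derive_comp G (fun x => - x) z _ _ HG Hop) as HC.
  apply (is_derive_ext (fun x => G (- x))).
  { intro t. unfold G. rewrite Ropp_involutive. auto. }
  replace (1 / Zd g s (pstar g s z)) with (scal (-1) (1 / - Zd g s (pstar g s z))).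
  { exact HC. }
  unfold scal; simpl; unfold mult; simpl. field. lra.
Qed.

Definition Lfun g s z := lamp g (pstar g s z).

Lemma L_props g s z : 0 < g -> 0 < s -> inZ g s z ->
  0 < Lfun g s z /\ ex_derive (Lfun g s) z /\ 0 < Derive (Lfun g s) z.
Proof.
  intros Hg Hs Hz.
  destruct (pstar_spec g s z Hg Hs Hz) as [P0 [A0 Z0]].
  set (p := pstar g s z) in *.
  pose proof (lamp_deriv g p Hg P0) as Hl.
  pose proof (pstar_deriv g s z Hg Hs Hz) as Hp. fold p in Hp.
  pose proof (is_derive_comp (lamp g) (pstar g s) z _ _ Hl Hp) as HC.
  assert (HZd : Zd g s p < 0) by (apply Zd_neg; lra).
  assert (HE : 0 < cE g p) by (apply E_pos; lra).
  assert (HB : 0 < cB g p) by (apply B_pos; lra).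
  assert (Hv : 0 < scal (1 / Zd g s p) (- cE g p / (p * cB g p) ^ 2)).
  { change (0 < (1 / Zd g s p) * (- cE g p / (p * cB g p) ^ 2)).
    assert (0 < (p * cB g p) ^ 2) by (apply pow_lt; nra).
    assert (H1 : 1 / Zd g s p < 0) by (unfold Rdiv; rewrite Rmult_1_l; apply Rinv_lt_0_compat; lra).
    assert (H2 : - cE g p / (p * cB g p) ^ 2 < 0) by (apply div_neg; lra).
    replace (1 / Zd g s p * (- cE g p / (p * cB g p) ^ 2)) with ((- (1 / Zd g s p)) * (- (- cE g p / (p * cB g p) ^ 2))) by ring.
    apply Rmult_lt_0_compat; lra. }
  split; [apply (proj1 (mp_inv g p Hg P0 A0))|split].
  - exists (scal (1 / Zd g s p) (- cE g p / (p * cB g p) ^ 2)). exact HC.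
  - rewrite (is_derive_unique (Lfun g s) z _ HC). exact Hv.
Qed.

Lemma rho_eq g rt2 st2 : 0 < rt2 -> 0 < st2 -> rho g (snr_stat rt2 st2) = rhoB g (st2 / rt2).
Proof.
  intros Hr Hs. unfold rho, rhoB, snr_stat, rv. destruct (Req_EM_T g 1); auto.
  f_equal. field. split; lra.
Qed.

Theorem theorem4 (rt2 st2 g : R) :
  0 < rt2 -> 0 < st2 -> 0 < g ->
  (* zeta <= rho  ==>  lambda_C = 0 *)
  (forall om2 eta : R, admissible rt2 om2 eta ->
     Rbar_le (Finite (conf_strength rt2 om2 eta)) (rho g (snr_stat rt2 st2)) ->
     opt_causal_reg rt2 st2 om2 eta g (Finite 0)) /\
  (* rho < zeta < 1  ==>  lambda_C = L(zeta) in (0,oo), L differentiable, L' > 0 *)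
  (exists L : R -> R,
     (forall z : R, Rbar_lt (rho g (snr_stat rt2 st2)) (Finite z) -> z < 1 ->
        0 < L z /\ ex_derive L z /\ 0 < Derive L z) /\
     (forall om2 eta : R, admissible rt2 om2 eta ->
        Rbar_lt (rho g (snr_stat rt2 st2)) (Finite (conf_strength rt2 om2 eta)) ->
        conf_strength rt2 om2 eta < 1 ->
        opt_causal_reg rt2 st2 om2 eta g (Finite (L (conf_strength rt2 om2 eta))))) /\
  (* zeta >= 1  ==>  lambda_C = oo *)
  (forall om2 eta : R, admissible rt2 om2 eta ->
     1 <= conf_strength rt2 om2 eta ->
     opt_causal_reg rt2 st2 om2 eta g p_infty).
Proof.
  intros Hr Hs Hg.
  rewrite (rho_eq g rt2 st2 Hr Hs).
  assert (Hsp : 0 < st2 / rt2) by (apply Rdiv_lt_0_compat; lra).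
  split; [|split].
  - intros om2 eta _ Hle. unfold opt_causal_reg, is_opt_reg.
    destruct (Req_EM_T 0 0) as [_|Hn]; [|exfalso; apply Hn; auto].
    unfold rhoB in Hle. destruct (Req_EM_T g 1) as [_|Hg1]; [simpl in Hle; contradiction|].
    simpl in Hle. unfold conf_strength in Hle.
    apply (lim_right0 _ (om2 - 2 * Rabs (om2 + eta) + st2 + om2)).
    + apply risk_incr; auto. intros p Hp HA.
      apply (proj1 (dPhi_sign rt2 st2 om2 eta g p Hr Hg ltac:(lra))).
      pose proof (Zf_gt_rho g (st2 / rt2) p Hg Hg1 Hsp Hp HA). lra.
    + apply risk_lb; auto.
  - exists (Lfun g (st2 / rt2)). split.
    + intros z Hz Hz1. apply L_props; auto. split; auto.
    + intros om2 eta _ Hz Hz1.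
      set (zeta := conf_strength rt2 om2 eta) in *.
      assert (HzZ : inZ g (st2 / rt2) zeta) by (split; auto).
      destruct (L_props g (st2 / rt2) zeta Hg Hsp HzZ) as [HLp _].
      destruct (pstar_spec g (st2 / rt2) zeta Hg Hsp HzZ) as [P0 [A0 Z0]].
      set (ps := pstar g (st2 / rt2) zeta) in *.
      assert (HL : Lfun g (st2 / rt2) zeta = lamp g ps) by reflexivity.
      destruct (mp_inv g ps Hg P0 A0) as [Hlp Hinv].
      unfold opt_causal_reg, is_opt_reg.
      destruct (Req_EM_T (Lfun g (st2 / rt2) zeta) 0) as [He|_]; [lra|].
      rewrite HL.
      assert (HRl : causal_risk rt2 st2 om2 eta g (lamp g ps) = Phi rt2 st2 om2 eta g ps).
      { rewrite risk_Phi by lra. unfold pl. rewrite Hinv. auto. }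
      assert (HZ' : Zf g (st2 / rt2) ps = (om2 + eta) / rt2) by (rewrite Z0; reflexivity).
      split; [exact Hlp|split].
      * intros mu Hmu. rewrite HRl, risk_Phi by lra.
        destruct (mp_main g mu Hg Hmu) as [Pm [Am _]].
        destruct (Req_dec (pl g mu) ps) as [Heq|Hne].
        -- rewrite Heq. lra.
        -- left. apply Phi_min; auto.
      * intros mu Hmu Hall.
        pose proof (Hall (lamp g ps) Hlp) as Hle.
        rewrite HRl, risk_Phi in Hle by lra.
        destruct (mp_main g mu Hg Hmu) as [Pm [Am [Emu _]]].
        destruct (Req_dec (pl g mu) ps) as [Heq|Hne].
        -- rewrite Emu. unfold pl in Heq. rewrite Heq. auto.
        -- exfalso. pose proof (Phi_min rt2 st2 om2 eta g ps Hr Hs Hg P0 A0 HZ' (pl g mu) Pm Am Hne). lra.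
  - intros om2 eta _ H1. unfold opt_causal_reg, is_opt_reg.
    unfold conf_strength in H1.
    apply (lim_infty _ (om2 - 2 * Rabs (om2 + eta) + st2 + om2)).
    + apply risk_decr; auto. intros p Hp HA.
      apply (proj2 (dPhi_sign rt2 st2 om2 eta g p Hr Hg ltac:(lra))).
      pose proof (Zf_lt1 g (st2 / rt2) p Hg Hsp Hp HA). lra.
    + apply risk_lb; auto.
Qed.
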